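(* For any $\alpha > 1$ and $x \geq 0$, \[ \overline{K}_\alpha(x) \geq (\alpha - 1)\,\overline{K}_{\alpha-1}(x). \]
   Context: $K_\alpha(x) := \int_0^\infty e^{-x\cosh t}\cosh(\alpha t)\,{\rm d}t$ for $\alpha\in\mathbb{R}$, $x > 0$; $\overline{K}_\alpha(x) := 2^{1-\alpha}x^\alpha K_\alpha(x)$ for $x>0$, and $\overline{K}_\alpha(0) := \Gamma(\alpha)$ for $\alpha > 0$. *)

(* Defs.v *)
From Stdlib Require Import Reals.
From Coquelicot Require Import Coquelicot.
Open Scope R_scope.

Definition BesselK (alpha x : R) : R :=
  RInt_gen (fun t => exp (- x * cosh t) * cosh (alpha * t))
           (at_point 0) (Rbar_locally p_infty).

Definition Gamma (a : R) : R :=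
  RInt_gen (fun t => Rpower t (a - 1) * exp (- t))
           (at_right 0) (Rbar_locally p_infty).

Definition Kbar (alpha x : R) : R :=
  if Rlt_dec 0 x then Rpower 2 (1 - alpha) * Rpower x alpha * BesselK alpha x
  else Gamma alpha.

(* Main.v *)
Require Import Defs.
From Stdlib Require Import Reals Lra.
From Coquelicot Require Import Coquelicot.
Open Scope R_scope.

Lemma ball_R (x y : R) (e : R) : ball x e y <-> Rabs (y - x) < e.
Proof. unfold ball; simpl; unfold AbsRing_ball, minus, plus, opp, abs; simpl. tauto. Qed.

Lemma conv_right (f : R -> R) c l :
  (forall b, c <= b -> ex_RInt f c b) ->
  filterlim (fun b => RInt f c b) (Rbar_locally p_infty) (locally l) ->
  is_RInt_gen f (at_point c) (Rbar_locally p_infty) l.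
Proof.
  intros Hex Hl P HP.
  apply Filter_prod with (Q := fun a => a = c)
    (R := fun b => c <= b /\ P (RInt f c b)).
  - reflexivity.
  - apply filter_and. exists c. intros; lra. apply Hl; exact HP.
  - intros a b -> [Hb HPb]. exists (RInt f c b); split; [apply (RInt_correct (V:=R_CompleteNormedModule)); auto | exact HPb].
Qed.

Lemma conv_left (f : R -> R) c l : 0 < c ->
  (forall a, 0 < a <= c -> ex_RInt f a c) ->
  filterlim (fun a => RInt f a c) (at_right 0) (locally l) ->
  is_RInt_gen f (at_right 0) (at_point c) l.
Proof.
  intros Hc Hex Hl P HP.
  apply Filter_prod with (R := fun b => b = c)
    (Q := fun a => (0 < a <= c) /\ P (RInt f a c)).
  - apply filter_and.
    + exists (mkposreal c Hc). intros y Hy Hy0. apply ball_R in Hy.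
      change (Rabs (y - 0) < c) in Hy. rewrite Rminus_0_r in Hy. apply Rabs_def2 in Hy. lra.
    + apply Hl; exact HP.
  - reflexivity.
  - intros a b [Ha HPa] ->. exists (RInt f a c); split; [apply (RInt_correct (V:=R_CompleteNormedModule)); auto | exact HPa].
Qed.

Lemma cauchy_dom {F : (R -> Prop) -> Prop} {FF : ProperFilter F} (Phi H : R -> R) (P0 : R -> Prop) lH :
  F P0 -> (forall u v, P0 u -> P0 v -> Rabs (Phi v - Phi u) <= Rabs (H v - H u)) ->
  filterlim H F (locally lH) -> exists l, filterlim Phi F (locally l).
Proof.
  intros HP0 Hd Hl.
  apply (filterlim_locally_cauchy Phi).
  intros eps.
  assert (Hc := proj2 (filterlim_locally_cauchy H) (ex_intro _ lH Hl) eps).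
  destruct Hc as [P [HP HPc]].
  exists (fun u => P u /\ P0 u). split. apply filter_and; auto.
  intros u v [Pu P0u] [Pv P0v]. apply ball_R. specialize (HPc u v Pu Pv). change (Rabs (H v - H u) < eps) in HPc.
  specialize (Hd u v P0u P0v). lra.
Qed.

Lemma squeeze0 {T} {F : (T -> Prop) -> Prop} {FF : Filter F} (h g : T -> R) :
  filterlim g F (locally 0) -> F (fun t => Rabs (h t) <= g t) -> filterlim h F (locally 0).
Proof.
  intros Hg Hb. apply filterlim_locally. intros eps.
  assert (Hg' := proj1 (filterlim_locally g 0) Hg eps).
  generalize (filter_and _ _ Hg' Hb). apply filter_imp. intros t [H1 H2].
  change (Rabs (g t - 0) < eps) in H1. change (Rabs (h t - 0) < eps). rewrite Rminus_0_r in *.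
  apply Rle_lt_trans with (g t); auto. apply Rle_lt_trans with (Rabs (g t)); auto. apply Rle_abs.
Qed.

Lemma lim_at_point (h : R -> R) c : filterlim h (at_point c) (locally (h c)).
Proof. intros P HP. exact (locally_singleton _ _ HP). Qed.

Lemma int_bound (f g H : R -> R) u v : u <= v -> ex_RInt f u v ->
  (forall t, u <= t <= v -> Rabs (f t) <= g t) -> is_RInt g u v (H v - H u) ->
  Rabs (RInt f u v) <= H v - H u.
Proof.
  intros Huv Hex Hb Hg.
  apply (norm_RInt_le f g u v (RInt f u v) (H v - H u) Huv Hb); auto.
  apply (RInt_correct (V:=R_CompleteNormedModule)); auto.
Qed.

Lemma int_bound2 (f g H : R -> R) (S : R -> Prop) :
  (forall u v, S u -> S v -> u <= v -> ex_RInt f u v /\ (forall t, u<=t<=v -> Rabs (f t) <= g t) /\ is_RInt g u v (H v - H u)) ->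
  forall u v, S u -> S v -> Rabs (RInt f u v) <= Rabs (H v - H u).
Proof.
  intros Hyp u v Su Sv.
  destruct (Rle_lt_dec u v) as [Huv|Huv].
  - destruct (Hyp u v Su Sv Huv) as [A [B C]].
    eapply Rle_trans. apply (int_bound f g H u v); auto. apply Rle_abs.
  - destruct (Hyp v u Sv Su (Rlt_le _ _ Huv)) as [A [B C]].
    rewrite <- opp_RInt_swap by auto. change (Rabs (- RInt f v u) <= Rabs (H v - H u)).
    rewrite Rabs_Ropp, Rabs_minus_sym.
    eapply Rle_trans. apply (int_bound f g H v u); auto. lra. apply Rle_abs.
Qed.

Lemma exist_right (f g H : R -> R) c lH :
  (forall t, c <= t -> continuous f t) ->
  (forall t, c <= t -> Rabs (f t) <= g t) ->
  (forall u v, c <= u -> u <= v -> is_RInt g u v (H v - H u)) ->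
  filterlim H (Rbar_locally p_infty) (locally lH) ->
  exists l, is_RInt_gen f (at_point c) (Rbar_locally p_infty) l.
Proof.
  intros Hc Hb Hg Hl.
  assert (Hex : forall u v, c <= u -> c <= v -> ex_RInt f u v).
  { intros u v Hu Hv. apply (ex_RInt_continuous (V:=R_CompleteNormedModule)). intros z Hz. apply Hc.
    apply Rle_trans with (Rmin u v); [|apply Hz]. apply Rmin_glb; auto. }
  destruct (cauchy_dom (F:=Rbar_locally p_infty) (fun b => RInt f c b) H (fun b => c <= b) lH) as [l Hlim]; auto.
  - exists c. intros; lra.
  - intros u v Hu Hv.
    assert (E : RInt f c v - RInt f c u = RInt f u v).
    { rewrite <- (RInt_Chasles f c u v) by (apply Hex; lra). change (RInt f c u + RInt f u v - RInt f c u = RInt f u v). ring. }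
    rewrite E. apply (int_bound2 f g H (fun b => c <= b)); auto.
    intros u' v' Hu' Hv' Huv. split; [apply Hex; auto|split; auto].
    intros t Ht. apply Hb. lra.
  - exists l. apply conv_right; auto. intros b Hb'. apply Hex; lra.
Qed.

Lemma exist_left (f g H : R -> R) c lH : 0 < c ->
  (forall t, 0 < t <= c -> continuous f t) ->
  (forall t, 0 < t <= c -> Rabs (f t) <= g t) ->
  (forall u v, 0 < u -> u <= v -> v <= c -> is_RInt g u v (H v - H u)) ->
  filterlim H (at_right 0) (locally lH) ->
  exists l, is_RInt_gen f (at_right 0) (at_point c) l.
Proof.
  intros Hc0 Hc Hb Hg Hl.
  assert (Hex : forall u v, 0 < u <= c -> 0 < v <= c -> ex_RInt f u v).
  { intros u v Hu Hv. apply (ex_RInt_continuous (V:=R_CompleteNormedModule)). intros z Hz. apply Hc.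
    split. apply Rlt_le_trans with (Rmin u v); [|apply Hz]. apply Rmin_glb_lt; lra.
    apply Rle_trans with (Rmax u v); [apply Hz|]. apply Rmax_lub; lra. }
  destruct (cauchy_dom (F:=at_right 0) (fun a => RInt f a c) H (fun a => 0 < a <= c) lH) as [l Hlim]; auto.
  - exists (mkposreal c Hc0). intros y Hy Hy0.
    change (Rabs (y - 0) < c) in Hy. rewrite Rminus_0_r in Hy. apply Rabs_def2 in Hy. simpl in Hy. lra.
  - intros u v Hu Hv.
    assert (E : RInt f v c - RInt f u c = - RInt f u v).
    { rewrite <- (RInt_Chasles f u v c) by (apply Hex; lra). change (RInt f v c - (RInt f u v + RInt f v c) = - RInt f u v). ring. }
    rewrite E, Rabs_Ropp. apply (int_bound2 f g H (fun b => 0 < b <= c)); auto.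
    intros u' v' Hu' Hv' Huv. split; [apply Hex; auto|split].
    intros t Ht. apply Hb. lra. apply Hg; lra.
  - exists l. apply conv_left; auto. intros b Hb'. apply Hex; lra.
Qed.

Lemma ln_le_m1 w : 0 < w -> ln w <= w - 1.
Proof. intros Hw. generalize (exp_ineq1_le (ln w)). rewrite exp_ln by auto. lra. Qed.

Lemma ln_bound c d : 0 < c -> 0 < d -> forall y, 0 < y -> c * ln y - d * y <= c * (ln (c/d) - 1).
Proof.
  intros Hc Hd y Hy.
  assert (H1 := ln_le_m1 (y * (d / c))).
  assert (Hdc : 0 < d / c) by (apply Rdiv_lt_0_compat; auto).
  rewrite ln_mult in H1 by (auto; apply Rmult_lt_0_compat; auto).
  assert (Hcd : ln (c / d) = - ln (d / c)).
  { rewrite <- ln_Rinv by auto. f_equal. field. split; lra. }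
  rewrite Hcd.
  assert (H2 : ln y + ln (d / c) <= y * (d / c) - 1) by (apply H1; apply Rmult_lt_0_compat; auto).
  assert (H3 : c * (ln y + ln (d / c)) <= c * (y * (d / c) - 1)) by (apply Rmult_le_compat_l; lra).
  replace (c * (y * (d / c) - 1)) with (d * y - c) in H3 by (field; lra).
  nra.
Qed.

Lemma cosh_ge t : exp t / 2 <= cosh t.
Proof. unfold cosh. generalize (exp_pos (- t)). lra. Qed.

Lemma exp_mono x y : x <= y -> exp x <= exp y.
Proof. intros [H|H]. left; apply exp_increasing; auto. subst; lra. Qed.

Lemma bessel_bound c z : 0 <= c -> 0 < z -> exists C, forall t,
  exp (c * t) * exp (- z * cosh t) <= C * exp (- t).
Proof.
  intros Hc Hz. exists (exp ((c+1) * (ln ((c+1)/(z/2)) - 1))). intros t.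
  rewrite <- !exp_plus. apply exp_mono.
  assert (H1 := ln_bound (c+1) (z/2) ltac:(lra) ltac:(lra) (exp t) (exp_pos t)).
  rewrite ln_exp in H1.
  assert (H2 := cosh_ge t).
  assert (z * (exp t / 2) <= z * cosh t) by (apply Rmult_le_compat_l; lra).
  nra.
Qed.

Lemma gamma_bound b : 0 < b -> exists C, forall t, 0 < t ->
  Rpower t b * exp (- t) <= C * exp (- t / 2).
Proof.
  intros Hb. exists (exp (b * (ln (b/(1/2)) - 1))). intros t Ht.
  unfold Rpower. rewrite <- !exp_plus. apply exp_mono.
  assert (H1 := ln_bound b (1/2) Hb ltac:(lra) t Ht). lra.
Qed.

Lemma cosh_le a t : 0 <= t -> Rabs (cosh (a * t)) <= exp (Rabs a * t).
Proof.
  intros Ht. unfold cosh.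
  assert (a * t <= Rabs a * t) by (apply Rmult_le_compat_r; auto; apply Rle_abs).
  assert (- (a * t) <= Rabs a * t).
  { generalize (Rle_abs (-a)). rewrite Rabs_Ropp. nra. }
  generalize (exp_mono _ _ H) (exp_mono _ _ H0) (exp_pos (a*t)) (exp_pos (-(a*t))). intros.
  rewrite Rabs_pos_eq by lra. lra.
Qed.

Lemma sinh_le a t : 0 <= a -> 0 <= t -> Rabs (sinh (a * t)) <= exp (a * t).
Proof.
  intros Ha Ht. unfold sinh.
  assert (- (a * t) <= a * t) by nra.
  generalize (exp_mono _ _ H) (exp_pos (a*t)) (exp_pos (-(a*t))). intros.
  rewrite Rabs_pos_eq by lra. lra.
Qed.

Lemma lim_exp_lin A k : 0 < k -> filterlim (fun t => A * exp (- (k * t))) (Rbar_locally p_infty) (locally 0).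
Proof.
  intros Hk.
  assert (H1 : is_lim (fun t => exp (- (k * t))) p_infty 0).
  { eapply filterlim_comp with (G := Rbar_locally m_infty).
    - intros P [M HM]. exists (- M / k). intros t Ht. apply HM.
      apply Rmult_lt_compat_l with (r := k) in Ht; auto.
      replace (k * (- M / k)) with (- M) in Ht by (field; lra). lra.
    - exact is_lim_exp_m. }
  assert (H2 := is_lim_scal_l _ A _ _ H1). simpl in H2.
  rewrite Rmult_0_r in H2. exact H2.
Qed.

Lemma lim_rpower_0 b : 0 < b -> filterlim (fun t => Rpower t b) (at_right 0) (locally 0).
Proof.
  intros Hb. unfold Rpower.
  eapply filterlim_comp with (G := Rbar_locally m_infty).
  2: exact is_lim_exp_m.
  eapply filterlim_comp. exact is_lim_ln_0.
  intros P [M HM]. exists (M / b). intros t Ht. apply HM.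
  apply Rmult_lt_compat_l with (r := b) in Ht; auto.
  replace (b * (M / b)) with M in Ht by (field; lra). lra.
Qed.

Lemma lim_id_0 : filterlim (fun t : R => t) (at_right 0) (locally 0).
Proof. intros P HP. unfold filtermap, at_right, within. generalize HP. apply (filter_imp (F:=locally 0)). auto. Qed.

Definition fG (a t : R) := Rpower t (a - 1) * exp (- t).
Definition hG (b t : R) := Rpower t b * exp (- t).
Definition dhG (b t : R) := b * Rpower t (b - 1) * exp (- t) - Rpower t b * exp (- t).

Lemma hG_der b t : 0 < t -> is_derive (hG b) t (dhG b t).
Proof.
  intros Ht.
  assert (H1 : is_derive (fun t => Rpower t b) t (b * Rpower t (b-1))).
  { apply is_derive_Reals. apply derivable_pt_lim_power; auto. }
  assert (H2 : is_derive (fun t => exp (- t)) t (- exp (- t))).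
  { auto_derive; auto. ring. }
  generalize (is_derive_mult _ _ _ _ _ H1 H2 (fun n m => Rmult_comm n m)). intro H.
  unfold dhG. replace (b * Rpower t (b - 1) * exp (- t) - Rpower t b * exp (- t))
    with (plus (mult (b * Rpower t (b-1)) (exp (- t))) (mult (Rpower t b) (- exp (- t)))).
  exact H. unfold plus, mult; simpl. ring.
Qed.

Lemma cont_rp_exp (b t : R) : 0 < t -> continuous (fun t => Rpower t b * exp (- t)) t.
Proof. intros Ht. apply (ex_derive_continuous (K:=R_AbsRing) (V:=R_NormedModule)). unfold Rpower. auto_derive. auto. Qed.

Lemma cont_dhG b t : 0 < t -> continuous (dhG b) t.
Proof. intros Ht. apply (ex_derive_continuous (K:=R_AbsRing) (V:=R_NormedModule)). unfold dhG, Rpower. auto_derive. auto. Qed.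

Lemma gamma_exists alpha : 1 < alpha ->
  exists l, is_RInt_gen (fG alpha) (at_right 0) (Rbar_locally p_infty) l.
Proof.
  intros Ha.
  assert (Hb : 0 < alpha - 1) by lra.
  destruct (exist_left (fG alpha) (fun _ => 1) (fun t => t) 1 0) as [l1 H1].
  - lra.
  - intros t Ht. apply cont_rp_exp; lra.
  - intros t [Ht0 Ht1]. unfold fG, Rpower.
    rewrite Rabs_pos_eq by (apply Rmult_le_pos; left; apply exp_pos).
    assert (ln t <= 0) by (generalize (ln_le_m1 t ltac:(lra)); lra).
    assert (exp ((alpha - 1) * ln t) <= 1) by (apply Rle_trans with (exp 0); [apply exp_mono; nra | rewrite exp_0; lra]).
    assert (exp (- t) <= 1) by (apply Rle_trans with (exp 0); [apply exp_mono; lra | rewrite exp_0; lra]).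
    generalize (exp_pos (- t)) (exp_pos ((alpha - 1) * ln t)). nra.
  - intros u v _ _ _. 
    replace (v - u) with (scal (v - u) 1) by (unfold scal; simpl; unfold mult; simpl; ring).
    apply (is_RInt_const (V:=R_NormedModule)).
  - exact lim_id_0.
  - destruct (gamma_bound (alpha - 1) Hb) as [C HC].
    destruct (exist_right (fG alpha) (fun t => C * exp (- t / 2)) (fun t => -2 * C * exp (- t / 2)) 1 0) as [l2 H2].
    + intros t Ht. apply cont_rp_exp; lra.
    + intros t Ht. unfold fG. rewrite Rabs_pos_eq by (apply Rmult_le_pos; left; apply exp_pos).
      apply HC; lra.
    + intros u v _ _.
      apply (is_RInt_derive (V:=R_CompleteNormedModule) (fun t => -2 * C * exp (- t / 2))).
      * intros x _. auto_derive; auto. change (-2 * C * (- (1) * / 2 * exp (- x * / 2)) = C * exp (- x * / 2)). field.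
      * intros x _. apply (ex_derive_continuous (K:=R_AbsRing) (V:=R_NormedModule)). auto_derive. auto.
    + eapply filterlim_ext. 2: apply (lim_exp_lin (-2 * C) (1/2)); lra.
      intros t. simpl. f_equal. f_equal. field.
    + exists (plus l1 l2). apply (is_RInt_gen_Chasles (Fa:=at_right 0) (Fc:=Rbar_locally p_infty) (fG alpha) 1); auto.
Qed.

Lemma filt_pos_pos (P : R * R -> Prop) :
  (forall a b, 0 < a -> 0 < b -> P (a, b)) ->
  filter_prod (at_right 0) (Rbar_locally p_infty) P.
Proof.
  intros HP. apply Filter_prod with (Q := fun a => 0 < a) (R := fun b => 0 < b).
  - exists (mkposreal 1 Rlt_0_1). intros; auto.
  - exists 0. auto.
  - auto.
Qed.

Lemma minmax_pos a b x : 0 < a -> 0 < b -> Rmin a b <= x -> 0 < x.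
Proof. intros Ha Hb H. apply Rlt_le_trans with (Rmin a b); auto. apply Rmin_glb_lt; auto. Qed.

Lemma Derive_hG b x : 0 < x -> Derive (hG b) x = dhG b x.
Proof. intros Hx. apply is_derive_unique. apply hG_der; auto. Qed.

Lemma gamma_rec alpha : 1 < alpha -> Gamma alpha = (alpha - 1) * Gamma (alpha - 1).
Proof.
  intros Ha. destruct (gamma_exists alpha Ha) as [I HI].
  assert (Hb : 0 < alpha - 1) by lra.
  set (b := alpha - 1) in *.
  assert (HD : is_RInt_gen (Derive (hG b)) (at_right 0) (Rbar_locally p_infty) (0 - 0)).
  { apply is_RInt_gen_Derive.
    - apply filt_pos_pos. intros a c Ha0 Hc0 x [Hx _]. simpl in Hx.
      exists (dhG b x). apply hG_der. apply (minmax_pos a c); auto.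
    - apply filt_pos_pos. intros a c Ha0 Hc0 x [Hx _]. simpl in Hx.
      assert (Hx0 : 0 < x) by (apply (minmax_pos a c); auto).
      apply continuous_ext_loc with (g := dhG b).
      + exists (mkposreal x Hx0). intros y Hy. change (Rabs (y - x) < x) in Hy.
        apply Rabs_def2 in Hy. rewrite Derive_hG by lra. reflexivity.
      + apply cont_dhG; auto.
    - apply squeeze0 with (g := fun t => Rpower t b).
      + apply lim_rpower_0; auto.
      + exists (mkposreal 1 Rlt_0_1). intros t _ Ht. unfold hG.
        rewrite Rabs_pos_eq by (apply Rmult_le_pos; left; [apply exp_pos|apply exp_pos]).
        assert (exp (- t) <= 1) by (apply Rle_trans with (exp 0); [apply exp_mono; lra | rewrite exp_0; lra]).
        generalize (exp_pos (b * ln t)). unfold Rpower. nra.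
    - destruct (gamma_bound b Hb) as [C HC].
      apply squeeze0 with (g := fun t => C * exp (- t / 2)).
      + eapply filterlim_ext. 2: apply (lim_exp_lin C (1/2)); lra.
        intros t. simpl. f_equal. f_equal. field.
      + exists 0. intros t Ht. unfold hG.
        rewrite Rabs_pos_eq by (apply Rmult_le_pos; left; [apply exp_pos|apply exp_pos]).
        apply HC; auto. }
  assert (HS := is_RInt_gen_plus _ _ _ _ HD HI).
  assert (HS2 : is_RInt_gen (fun t => b * fG (alpha - 1) t) (at_right 0) (Rbar_locally p_infty) (plus (0 - 0) I)).
  { eapply is_RInt_gen_ext. 2: exact HS.
    apply filt_pos_pos. intros a c Ha0 Hc0 x [Hx _]. simpl in Hx.
    assert (Hx0 : 0 < x) by (apply (minmax_pos a c); auto; lra).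
    rewrite Derive_hG by auto. unfold dhG, fG, plus; simpl. fold b. replace (b - 1) with (alpha - 1 - 1) by (unfold b; ring). ring. }
  assert (HS3 := is_RInt_gen_scal _ (/ b) _ HS2).
  assert (HS4 : is_RInt_gen (fG (alpha - 1)) (at_right 0) (Rbar_locally p_infty) (scal (/ b) (plus (0 - 0) I))).
  { eapply is_RInt_gen_ext. 2: exact HS3.
    apply filt_pos_pos. intros a c Ha0 Hc0 x _. unfold scal; simpl; unfold mult; simpl. field. lra. }
  change (RInt_gen (fG alpha) (at_right 0) (Rbar_locally p_infty) = b * RInt_gen (fG (alpha - 1)) (at_right 0) (Rbar_locally p_infty)).
  rewrite (is_RInt_gen_unique _ _ HI), (is_RInt_gen_unique _ _ HS4).
  unfold scal, plus; simpl; unfold mult, plus; simpl.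
  assert (E : forall y : R, y = b * (/ b * (0 - 0 + y))) by (intros; field; lra). apply E.
Qed.

Definition fK (z a t : R) := exp (- z * cosh t) * cosh (a * t).

Lemma filt_0_pos (P : R * R -> Prop) :
  (forall b, 0 < b -> P (0, b)) ->
  filter_prod (at_point 0) (Rbar_locally p_infty) P.
Proof.
  intros HP. apply Filter_prod with (Q := fun a => a = 0) (R := fun b => 0 < b).
  - reflexivity.
  - exists 0. auto.
  - intros a b -> Hb. auto.
Qed.

Lemma bessel_exists z a : 0 < z ->
  exists l, is_RInt_gen (fK z a) (at_point 0) (Rbar_locally p_infty) l.
Proof.
  intros Hz. destruct (bessel_bound (Rabs a) z (Rabs_pos a) Hz) as [C HC].
  apply (exist_right (fK z a) (fun t => C * exp (- t)) (fun t => - C * exp (- t)) 0 0).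
  - intros t _. apply (ex_derive_continuous (K:=R_AbsRing) (V:=R_NormedModule)).
    unfold fK, cosh. auto_derive. auto.
  - intros t Ht. unfold fK. rewrite Rabs_mult, Rabs_pos_eq by (left; apply exp_pos).
    apply Rle_trans with (exp (- z * cosh t) * exp (Rabs a * t)).
    + apply Rmult_le_compat_l. left; apply exp_pos. apply cosh_le; auto.
    + rewrite Rmult_comm. apply HC.
  - intros u v _ _.
    apply (is_RInt_derive (V:=R_CompleteNormedModule) (fun t => - C * exp (- t))).
    + intros x _. auto_derive; auto. ring.
    + intros x _. apply (ex_derive_continuous (K:=R_AbsRing) (V:=R_NormedModule)). auto_derive. auto.
  - eapply filterlim_ext. 2: apply (lim_exp_lin (- C) 1); lra.
    intros t. simpl. f_equal. f_equal. ring.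
Qed.

Lemma nonneg_gen f l : is_RInt_gen f (at_point 0) (Rbar_locally p_infty) l ->
  (forall t, 0 <= f t) -> 0 <= l.
Proof.
  intros H Hf.
  assert (N := RInt_gen_norm (Fa := at_point 0) (Fb := Rbar_locally p_infty) f f l l).
  assert (Rabs l <= l).
  { apply N; auto.
    - apply filt_0_pos. intros b Hb. simpl. lra.
    - apply filt_0_pos. intros b Hb x _. change (Rabs (f x) <= f x). rewrite Rabs_pos_eq; auto. lra. }
  generalize (Rabs_pos l). lra.
Qed.

Lemma cosh_id b t : cosh (b * t) - cosh ((b - 2) * t) = 2 * sinh ((b - 1) * t) * sinh t.
Proof.
  unfold cosh, sinh.
  replace (b * t) with ((b - 1) * t + t) by ring.
  replace (- ((b - 1) * t + t)) with (- ((b - 1) * t) + - t) by ring.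
  replace ((b - 2) * t) with ((b - 1) * t + - t) by ring.
  replace (- ((b - 1) * t + - t)) with (- ((b - 1) * t) + t) by ring.
  rewrite !exp_plus.
  assert (exp t * exp (- t) = 1) by (rewrite <- exp_plus; replace (t + - t) with 0 by ring; apply exp_0).
  field_simplify. nra. 
Qed.

Definition hK (z b t : R) := sinh (b * t) * exp (- z * cosh t).
Definition dhK (z b t : R) := b * cosh (b * t) * exp (- z * cosh t) + sinh (b * t) * (exp (- z * cosh t) * (- z * sinh t)).

Lemma hK_der z b t : is_derive (hK z b) t (dhK z b t).
Proof. unfold hK, dhK, cosh, sinh. auto_derive; auto. unfold Rdiv, Rminus. ring. Qed.

Lemma Derive_hK z b t : Derive (hK z b) t = dhK z b t.
Proof. apply is_derive_unique, hK_der. Qed.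

Lemma bessel_ineq alpha z : 1 < alpha -> 0 < z ->
  z * BesselK alpha z - 2 * (alpha - 1) * BesselK (alpha - 1) z >= 0.
Proof.
  intros Ha Hz.
  destruct (bessel_exists z alpha Hz) as [Ia HIa].
  destruct (bessel_exists z (alpha - 1) Hz) as [Ib HIb].
  destruct (bessel_exists z (alpha - 2) Hz) as [Ic HIc].
  pose (b := alpha - 1).
  assert (Hb : 0 < b) by (unfold b; lra).
  assert (HD : is_RInt_gen (Derive (hK z b)) (at_point 0) (Rbar_locally p_infty) (0 - hK z b 0)).
  { apply is_RInt_gen_Derive.
    - apply filt_0_pos. intros c _ x _. exists (dhK z b x). apply hK_der.
    - apply filt_0_pos. intros c _ x _.
      apply continuous_ext with (f := dhK z b).
      + intros y. rewrite Derive_hK. reflexivity.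
      + apply (ex_derive_continuous (K:=R_AbsRing) (V:=R_NormedModule)).
        unfold dhK, cosh, sinh. auto_derive. auto.
    - apply lim_at_point.
    - destruct (bessel_bound b z (Rlt_le _ _ Hb) Hz) as [C HC].
      apply squeeze0 with (g := fun t => C * exp (- t)).
      + eapply filterlim_ext. 2: apply (lim_exp_lin C 1); lra.
        intros t. simpl. f_equal. f_equal. ring.
      + exists 0. intros t Ht. unfold hK.
        rewrite Rabs_mult, (Rabs_pos_eq (exp _)) by (left; apply exp_pos).
        eapply Rle_trans. 2: apply HC.
        apply Rmult_le_compat_r. left; apply exp_pos. apply sinh_le; lra. }
  assert (H1 := is_RInt_gen_minus _ _ _ _ (is_RInt_gen_scal _ z _ HIc) (is_RInt_gen_scal _ 2 _ HD)).
  assert (H2 := is_RInt_gen_minus _ _ _ _ (is_RInt_gen_scal _ z _ HIa) (is_RInt_gen_scal _ (2 * b) _ HIb)).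
  assert (H1' : is_RInt_gen (fun y => minus (scal z (fK z alpha y)) (scal (2 * b) (fK z (alpha - 1) y)))
     (at_point 0) (Rbar_locally p_infty) (minus (scal z Ic) (scal 2 (0 - hK z b 0)))).
  { eapply is_RInt_gen_ext. 2: exact H1.
    apply filt_0_pos. intros c _ x _. rewrite Derive_hK.
    unfold minus, scal, plus, opp; simpl; unfold mult; simpl.
    unfold fK, dhK, b.
    assert (E := cosh_id alpha x).
    replace (cosh ((alpha - 2) * x)) with (cosh (alpha * x) - 2 * sinh ((alpha - 1) * x) * sinh x) by lra.
    ring. }
  assert (Hnn : 0 <= Ic).
  { apply (nonneg_gen (fK z (alpha - 2))); auto. intros t. unfold fK.
    apply Rmult_le_pos. left; apply exp_pos. unfold cosh. generalize (exp_pos ((alpha-2)*t)) (exp_pos (-((alpha-2)*t))). lra. }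
  assert (E1 := is_RInt_gen_unique _ _ H1').
  assert (E2 : RInt_gen (fun y => minus (scal z (fK z alpha y)) (scal (2 * b) (fK z (alpha - 1) y))) (at_point 0) (Rbar_locally p_infty) = minus (scal z Ia) (scal (2 * b) Ib)) by exact (is_RInt_gen_unique _ _ H2).
  rewrite E2 in E1.
  change (BesselK alpha z) with (RInt_gen (fK z alpha) (at_point 0) (Rbar_locally p_infty)).
  change (BesselK (alpha - 1) z) with (RInt_gen (fK z (alpha - 1)) (at_point 0) (Rbar_locally p_infty)).
  rewrite (is_RInt_gen_unique _ _ HIa), (is_RInt_gen_unique _ _ HIb).
  revert E1. unfold minus, scal, plus, opp; simpl; unfold mult; simpl.
  unfold hK. rewrite Rmult_0_r, sinh_0, Rmult_0_l. fold b. intros E1. 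
  assert (z * Ic >= 0) by (apply Rle_ge; apply Rmult_le_pos; lra).
  lra.
Qed.

Theorem lemma3p1 (alpha x : R) (halpha : 1 < alpha) (hx : 0 <= x) :
  Kbar alpha x >= (alpha - 1) * Kbar (alpha - 1) x.
Proof.
  unfold Kbar. destruct (Rlt_dec 0 x) as [Hx|Hx].
  - assert (HB := bessel_ineq alpha x halpha Hx).
    assert (E1 : Rpower x alpha = x * Rpower x (alpha - 1)).
    { replace alpha with (1 + (alpha - 1)) at 1 by ring. rewrite Rpower_plus, Rpower_1; auto. }
    assert (E2 : Rpower 2 (1 - (alpha - 1)) = 2 * Rpower 2 (1 - alpha)).
    { replace (1 - (alpha - 1)) with (1 + (1 - alpha)) by ring. rewrite Rpower_plus, Rpower_1; auto; lra. }
    rewrite E1, E2.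
    assert (P1 : 0 < Rpower 2 (1 - alpha)) by apply exp_pos.
    assert (P2 : 0 < Rpower x (alpha - 1)) by apply exp_pos.
    assert (0 <= Rpower 2 (1 - alpha) * Rpower x (alpha - 1) * (x * BesselK alpha x - 2 * (alpha - 1) * BesselK (alpha - 1) x)).
    { apply Rmult_le_pos. apply Rmult_le_pos; lra. lra. }
    apply Rle_ge. nra.
  - rewrite (gamma_rec alpha halpha). lra.
Qed.
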